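(* In the Banach space $\ell^\infty=(\ell^1)^*$ equipped with the weak$^*$ topology $\sigma(\ell^\infty,\ell^1)$, the set $A=\{e_1+e_n : n\in\mathbb{N}, n\ge 2\}$ is minimal but not topologically independent.
   Context: $e_i\in\ell^\infty$ denotes the sequence with $1$ in coordinate $i$ and $0$ elsewhere. A subset $A\subseteq X\setminus\{0\}$ of a topological vector space $X$ is topologically independent if for every neighborhood $W$ of $0$ there is a neighborhood $U$ of $0$ such that for every finite $F\subseteq A$ and integers $\{z_a: a\in F\}$, $\sum_{a\in F}z_a a\in U$ implies $z_a a\in W$ for all $a\in F$. $A$ is minimal if $a\notin\overline{\langle A\setminus\{a\}\rangle_{\mathbb{R}}}$ for every $a\in A$ (linear span, closure in $X$). *)

(* Defs.v *)
From Stdlib Require Import Reals List ZArith.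
From Coquelicot Require Import Coquelicot.
Open Scope R_scope.

Definition seqR := nat -> R.

Definition zero_seq : seqR := fun _ => 0.
Definition add_seq (x y : seqR) : seqR := fun k => x k + y k.
Definition scale_seq (r : R) (x : seqR) : seqR := fun k => r * x k.

Definition linf (x : seqR) : Prop := exists M : R, forall n, Rabs (x n) <= M.

Definition ell1 (y : seqR) : Prop := ex_series (fun n => Rabs (y n)).

Definition pairing (x y : seqR) : R := Series (fun n => x n * y n).

(* W is a neighbourhood of 0 in (ell^inf, sigma(ell^inf, ell^1)):
   it contains (the trace on ell^inf of) a basic weak* neighbourhood
   { x | |<x,y_j>| < eps for all j } with finitely many y_j in ell^1. *)
Definition wsnbhs0 (W : seqR -> Prop) : Prop :=
  exists (ys : list seqR) (eps : R),
    0 < eps /\ List.Forall ell1 ys /\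
    forall x, linf x -> (forall y, In y ys -> Rabs (pairing x y) < eps) -> W x.

Definition wsnbhs (p : seqR) (W : seqR -> Prop) : Prop :=
  wsnbhs0 (fun x => W (add_seq p x)).

Definition wsclosure (S : seqR -> Prop) (p : seqR) : Prop :=
  forall W, wsnbhs p W -> exists s, S s /\ W s.

Definition lincomb (l : list (R * seqR)) : seqR :=
  fold_right (fun p acc => add_seq (scale_seq (fst p) (snd p)) acc) zero_seq l.

Definition rspan (A : seqR -> Prop) (x : seqR) : Prop :=
  exists l : list (R * seqR), List.Forall (fun p => A (snd p)) l /\ x = lincomb l.

Definition zsum (F : list seqR) (z : seqR -> Z) : seqR :=
  fold_right (fun a acc => add_seq (scale_seq (IZR (z a)) a) acc) zero_seq F.

Definition top_independent (A : seqR -> Prop) : Prop :=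
  forall W, wsnbhs0 W ->
    exists U, wsnbhs0 U /\
      forall (F : list seqR) (z : seqR -> Z),
        NoDup F -> (forall a, In a F -> A a) ->
        U (zsum F z) ->
        forall a, In a F -> W (scale_seq (IZR (z a)) a).

Definition minimal (A : seqR -> Prop) : Prop :=
  forall a, A a -> ~ wsclosure (rspan (fun b => A b /\ b <> a)) a.

Definition e (i : nat) : seqR := fun k => if Nat.eqb k i then 1 else 0.

Definition A14 (x : seqR) : Prop :=
  exists n : nat, (2 <= n)%nat /\ x = add_seq (e 1) (e n).

(* Main.v *)
Require Import Defs.
From Stdlib Require Import Reals List ZArith Lia Lra.
From Coquelicot Require Import Coquelicot.
Open Scope R_scope.

Lemma e_eq (i : nat) : e i i = 1.
Proof. unfold e; now rewrite Nat.eqb_refl. Qed.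

Lemma e_neq (i k : nat) : k <> i -> e i k = 0.
Proof. intro H; unfold e; apply Nat.eqb_neq in H; now rewrite H. Qed.

Lemma e_abs (i k : nat) : Rabs (e i k) <= 1.
Proof. unfold e; destruct (Nat.eqb k i); rewrite ?Rabs_R1, ?Rabs_R0; lra. Qed.

Lemma sum_e (m : nat) (c : seqR) (N : nat) :
  sum_n (fun j => e m j * c j) N = if Nat.leb m N then c m else 0.
Proof.
  induction N as [|N IH].
  - rewrite sum_O. match goal with |- ?a = ?b => change (@eq R a b) end. destruct m as [|m]; simpl.
    + rewrite e_eq; ring.
    + rewrite e_neq by lia; ring.
  - rewrite sum_Sn, IH. change plus with Rplus.
    match goal with |- ?a = ?b => change (@eq R a b) end.
    destruct (Nat.eq_dec m (S N)) as [->|Hne].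
    + rewrite e_eq, Nat.leb_refl.
      try (replace (Nat.leb (S N) N) with false by (symmetry; apply Nat.leb_gt; lia)). ring.
    + rewrite e_neq by lia.
      destruct (Nat.leb m N) eqn:H1.
      * apply Nat.leb_le in H1. assert (Nat.leb m (S N) = true) as -> by (apply Nat.leb_le; lia). ring.
      * apply Nat.leb_gt in H1. assert (Nat.leb m (S N) = false) as -> by (apply Nat.leb_gt; lia). ring.
Qed.

Lemma is_series_e (m : nat) (c : seqR) : is_series (fun j => e m j * c j) (c m).
Proof.
  assert (H : is_lim_seq (sum_n (fun j => e m j * c j)) (c m)).
  { apply is_lim_seq_ext_loc with (u := fun _ => c m).
    - exists m. intros n Hn. rewrite sum_e. apply Nat.leb_le in Hn. now rewrite Hn.
    - apply is_lim_seq_const. }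
  exact H.
Qed.

Lemma ell1_e (m : nat) : ell1 (e m).
Proof.
  unfold ell1. exists 1.
  eapply is_series_ext; [|apply (is_series_e m (fun _ => 1))].
  intro n. simpl. unfold e. destruct (Nat.eqb n m); rewrite ?Rabs_R1, ?Rabs_R0; ring.
Qed.

Lemma pairing_e (x : seqR) (m : nat) : pairing x (e m) = x m.
Proof.
  unfold pairing. apply is_series_unique.
  eapply is_series_ext; [|apply (is_series_e m x)]. intro; simpl; ring.
Qed.

Lemma lincomb_zero (P : seqR -> Prop) (m : nat) (l : list (R * seqR)) :
  List.Forall (fun p => P (snd p)) l -> (forall b, P b -> b m = 0) -> lincomb l m = 0.
Proof.
  intros HF HS. induction HF as [|p l Hp HF IH]; simpl.
  - reflexivity.
  - unfold add_seq, scale_seq. rewrite IH. rewrite (HS (snd p) Hp). ring.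
Qed.

Lemma common_N (ys : list seqR) (d : R) : 0 < d -> List.Forall ell1 ys ->
  exists N, forall y, In y ys -> forall n, (N <= n)%nat -> Rabs (y n) < d.
Proof.
  intros Hd HF. induction HF as [|y ys Hy HF IH].
  - exists 0%nat. intros y [].
  - destruct IH as [N1 HN1].
    apply ex_series_lim_0, is_lim_seq_spec in Hy.
    destruct (Hy (mkposreal d Hd)) as [N2 HN2].
    exists (Nat.max N1 N2). intros y' [<-|Hin] n Hn.
    + specialize (HN2 n ltac:(lia)). simpl in HN2.
      rewrite Rminus_0_r, Rabs_Rabsolu in HN2. exact HN2.
    + apply HN1; auto; lia.
Qed.

Theorem mainTheorem14 :
  (forall x, A14 x -> linf x /\ x <> zero_seq) /\
  minimal A14 /\ ~ top_independent A14.
Proof.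
  split; [|split].
  - intros x [n [Hn ->]]. split.
    + exists 2. intro k. unfold add_seq.
      eapply Rle_trans; [apply Rabs_triang|]. pose proof (e_abs 1 k); pose proof (e_abs n k); lra.
    + intro H. assert (H1 := f_equal (fun f => f 1%nat) H). simpl in H1.
      unfold add_seq, zero_seq in H1. rewrite e_eq, e_neq in H1 by lia. lra.
  - intros a [m [Hm ->]] Hcl.
    destruct (Hcl (fun s => / 2 < s m)) as [s [[l [HF ->]] Hs]].
    + exists (e m :: nil), (/2). split; [lra|]. split.
      * constructor; [apply ell1_e|constructor].
      * intros x _ Hx. specialize (Hx (e m) (or_introl eq_refl)).
        rewrite pairing_e in Hx. unfold add_seq. rewrite e_eq, e_neq by lia.
        apply Rabs_def2 in Hx. lra.
    + rewrite (lincomb_zero (fun b : seqR => A14 b /\ b <> add_seq (e 1) (e m)) m l HF) in Hs; [lra|].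
      intros b [[n [Hn ->]] Hne]. unfold add_seq.
      assert (n <> m) by (intro; subst; now apply Hne).
      rewrite !e_neq by lia. ring.
  - intro HTI.
    destruct (HTI (fun x => Rabs (x 1%nat) < /2)) as [U [[ys [eps [Heps [HF HU]]]] HUz]].
    + exists (e 1 :: nil), (/2). split; [lra|]. split.
      * constructor; [apply ell1_e|constructor].
      * intros x _ Hx. specialize (Hx (e 1) (or_introl eq_refl)).
        rewrite pairing_e in Hx. exact Hx.
    + destruct (common_N ys (eps/2) ltac:(lra) HF) as [N HN].
      set (n := Nat.max N 2). set (k := S n).
      set (a := add_seq (e 1) (e n)). set (b := add_seq (e 1) (e k)).
      set (z := fun c : seqR => if Req_EM_T (c n) 1 then 1%Z else (-1)%Z).
      assert (Ha : a n = 1) by (unfold a, add_seq; rewrite e_eq, e_neq by lia; ring).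
      assert (Hb : b n = 0) by (unfold b, add_seq; rewrite !e_neq by lia; ring).
      assert (Hza : z a = 1%Z) by (unfold z; destruct (Req_EM_T (a n) 1); [reflexivity|contradiction]).
      assert (Hzb : z b = (-1)%Z) by (unfold z; destruct (Req_EM_T (b n) 1); [lra|reflexivity]).
      assert (Hx : forall j, zsum (a :: b :: nil) z j = e n j - e k j).
      { intro j. simpl. unfold add_seq, scale_seq, zero_seq. rewrite Hza, Hzb.
        unfold a, b, add_seq. simpl. ring. }
      assert (HUx : U (zsum (a :: b :: nil) z)).
      { apply HU.
        - exists 2. intro j. rewrite Hx. unfold Rminus.
          eapply Rle_trans; [apply Rabs_triang|]. rewrite Rabs_Ropp.
          pose proof (e_abs n j); pose proof (e_abs k j); lra.
        - intros y Hy. unfold pairing.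
          assert (Hs : is_series (fun j => zsum (a :: b :: nil) z j * y j) (y n - y k)).
          { eapply is_series_ext; [|apply (is_series_minus _ _ _ _ (is_series_e n y) (is_series_e k y))].
            intro j. rewrite Hx. unfold minus, plus, opp; simpl. ring. }
          rewrite (is_series_unique _ _ Hs).
          pose proof (HN y Hy n ltac:(lia)). pose proof (HN y Hy k ltac:(lia)).
          unfold Rminus. eapply Rle_lt_trans; [apply Rabs_triang|]. rewrite Rabs_Ropp. lra. }
      assert (Hab : a <> b) by (intro E; rewrite E in Ha; lra).
      specialize (HUz (a :: b :: nil) z ltac:(constructor; [simpl; intuition|constructor; [simpl; tauto|constructor]])
        ltac:(intros c [<-|[<-|[]]]; [exists n|exists k]; split; auto; lia) HUx a (or_introl eq_refl)).
      simpl in HUz. rewrite Hza in HUz. unfold scale_seq, a, add_seq in HUz.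
      rewrite e_eq, e_neq in HUz by lia. rewrite Rmult_plus_distr_l, Rmult_1_l, Rmult_0_r, Rplus_0_r, Rabs_R1 in HUz. lra.
Qed.
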